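(* Let $X$ be a real Banach space with $\dim X\ge 2$ and let $\alpha,\beta>0$. Then $$\min\{\alpha,\beta\}\,\mu(X)\le DW_B(X,\alpha,\beta)\le 2\max\{\alpha,\beta\}\,\mu(X).$$
   Context: For $x,y\in X$, $x\perp_B y$ (Birkhoff orthogonality) means $\|x+\lambda y\|\ge\|x\|$ for all $\lambda\in\mathbb R$. For $\alpha,\beta>0$, $$DW_B(X,\alpha,\beta)=\sup\left\{\frac{\alpha\|x\|+\beta\|y\|}{\|x-y\|}\left\|\frac{x}{\|x\|}-\frac{y}{\|y\|}\right\|: x,y\in X\setminus\{0\},\ x\perp_B y\right\}.$$ The rectangular constant is $\mu(X)=\sup\left\{\frac{\|x\|+\|y\|}{\|x+y\|}: x,y\in X\setminus\{0\},\ x\perp_B y\right\}$. *)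

(* Defs.v *)
From HB Require Import structures.
From mathcomp Require Import all_boot all_order all_algebra.
From mathcomp Require Import all_classical all_reals all_analysis.
Set Implicit Arguments. Unset Strict Implicit. Unset Printing Implicit Defensive.
Import Order.TTheory GRing.Theory Num.Theory.
Import numFieldNormedType.Exports.
Local Open Scope classical_set_scope.
Local Open Scope ring_scope.

Definition birkhoff_orth (R : realType) (X : normedModType R) (x y : X) : Prop :=
  forall l : R, `|x| <= `|x + l *: y|.

Definition dim_ge2 (R : realType) (X : normedModType R) : Prop :=
  exists x y : X, forall a b : R, a *: x + b *: y = 0 -> a = 0 /\ b = 0.

Definition unitv (R : realType) (X : normedModType R) (x : X) : X := `|x|^-1 *: x.

Definition DW_B (R : realType) (X : normedModType R) (alpha beta : R) : \bar R :=
  ereal_sup [set r | exists x y : X,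
     [/\ x != 0, y != 0, birkhoff_orth x y & r = ((alpha * `|x| + beta * `|y|) / `|x - y|
                  * `|unitv x - unitv y|)%:E]].

Definition rect_const (R : realType) (X : normedModType R) : \bar R :=
  ereal_sup [set r | exists x y : X,
     [/\ x != 0, y != 0, birkhoff_orth x y & r = ((`|x| + `|y|) / `|x + y|)%:E]].

(* Main.v *)
Require Import Defs.
From HB Require Import structures.
From mathcomp Require Import all_boot all_order all_algebra.
From mathcomp Require Import all_classical all_reals all_analysis.
From mathcomp Require Import lra.
Import Order.TTheory GRing.Theory Num.Theory.
Import numFieldNormedType.Exports.
Local Open Scope ring_scope.

Section H.
Variables (R : realType) (X : normedModType R).

Lemma bo_sub (x y : X) : x != 0 -> birkhoff_orth x y -> 0 < `|x - y|.
Proof.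
move=> x0 h; rewrite normr_gt0; apply/negP => /eqP/subr0_eq exy.
have := h (-1); rewrite scaleN1r exy subrr normr0.
by rewrite leNgt normr_gt0 -exy x0.
Qed.

Lemma bo_opp (x y : X) : birkhoff_orth x y -> birkhoff_orth x (- y).
Proof. by move=> h l; rewrite scalerN -scaleNr; apply: h. Qed.

Lemma unitv_norm (x : X) : x != 0 -> `|unitv x| = 1.
Proof.
move=> x0; rewrite /unitv normrZ normfV normr_id mulVf //.
by rewrite normr_eq0.
Qed.

Lemma unitvN (x : X) : unitv (- x) = - unitv x.
Proof. by rewrite /unitv normrN scalerN. Qed.

Lemma bo_unit (x y : X) : x != 0 -> y != 0 -> birkhoff_orth x y ->
  1 <= `|unitv x + unitv y|.
Proof.
move=> x0 y0 h.
have nx : 0 < `|x| by rewrite normr_gt0.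
have ny : 0 < `|y| by rewrite normr_gt0.
have -> : unitv x + unitv y = `|x|^-1 *: (x + (`|x| / `|y|) *: y).
  by rewrite /unitv scalerDr scalerA mulrA (mulVf (lt0r_neq0 nx)) mul1r.
rewrite normrZ normfV normr_id -(mulVf (lt0r_neq0 nx)).
by apply: ler_wpM2l; [rewrite invr_ge0 ltW | exact: h].
Qed.

Lemma unit_sub2 (x y : X) : x != 0 -> y != 0 -> `|unitv x - unitv y| <= 2.
Proof.
move=> x0 y0; apply: (le_trans (ler_normB _ _)).
by rewrite !unitv_norm.
Qed.
End H.

Theorem theorem5 (R : realType) (X : completeNormedModType R) (alpha beta : R) :
  dim_ge2 X -> 0 < alpha -> 0 < beta ->
  ((Num.min alpha beta)%:E * rect_const X <= DW_B X alpha beta)%E /\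
  (DW_B X alpha beta <= (2 * Num.max alpha beta)%:E * rect_const X)%E.
Proof.
move=> _ a0 b0.
have m0 : 0 < Num.min alpha beta by rewrite lt_min a0 b0.
have M0 : 0 < 2 * Num.max alpha beta by rewrite mulr_gt0 // lt_max a0.
have ma : Num.min alpha beta <= alpha by rewrite ge_min lexx.
have mb : Num.min alpha beta <= beta by rewrite ge_min lexx orbT.
have Ma : alpha <= Num.max alpha beta by rewrite le_max lexx.
have Mb : beta <= Num.max alpha beta by rewrite le_max lexx orbT.
split.
- rewrite /rect_const -ereal_sup_pZl //; apply/ereal_supP => _ [_ [x [y [x0 y0 hxy ->]]] <-].
  apply: le_ereal_sup_tmp.
  have yN0 : - y != 0 by rewrite oppr_eq0.
  exists ((alpha * `|x| + beta * `|- y|) / `|x - - y| * `|unitv x - unitv (- y)|)%:E.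
    by exists x, (- y); split => //; apply: bo_opp.
  rewrite -EFinM lee_fin normrN opprK unitvN opprK.
  have s0 : 0 < `|x + y| by have := @bo_sub _ _ _ _ x0 (@bo_opp _ _ _ _ hxy); rewrite opprK.
  have u1 := @bo_unit _ _ _ _ x0 y0 hxy.
  set a := `|x|; set b := `|y|; set t := `|x + y|^-1.
  have t0 : 0 < t by rewrite /t invr_gt0.
  have a0' : 0 <= a by rewrite /a.
  have b0' : 0 <= b by rewrite /b.
  rewrite !mulrA.
  have h1 : Num.min alpha beta * (a + b) <= alpha * a + beta * b by nra.
  have h2 : Num.min alpha beta * (a + b) * t <= (alpha * a + beta * b) * t.
    by apply: ler_wpM2r; [exact: ltW | exact: h1].
  set k := (alpha * a + beta * b) * t in h2 *.
  have k0 : 0 <= k by rewrite /k; apply: mulr_ge0; last exact: ltW; apply: addr_ge0; apply: mulr_ge0 => //; exact: ltW.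
  nra.
- rewrite /rect_const -ereal_sup_pZl //; apply/ereal_supP => _ [x [y [x0 y0 hxy ->]]].
  apply: le_ereal_sup_tmp.
  have yN0 : - y != 0 by rewrite oppr_eq0.
  exists ((2 * Num.max alpha beta)%:E * ((`|x| + `|- y|) / `|x + - y|)%:E)%E.
    by exists ((`|x| + `|- y|) / `|x + - y|)%:E => //; exists x, (- y); split => //; apply: bo_opp.
  rewrite -EFinM lee_fin normrN.
  have s0 : 0 < `|x - y| by rewrite bo_sub.
  have u2 := @unit_sub2 _ _ _ _ x0 y0.
  have u0 : 0 <= `|unitv x - unitv y| by [].
  set a := `|x|; set b := `|y|; set t := `|x - y|^-1.
  have t0 : 0 < t by rewrite /t invr_gt0.
  have a0' : 0 <= a by rewrite /a.
  have b0' : 0 <= b by rewrite /b.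
  have h1 : alpha * a + beta * b <= Num.max alpha beta * (a + b) by rewrite mulrDr; apply: lerD; apply: ler_wpM2r.
  have h2 : (alpha * a + beta * b) * t <= Num.max alpha beta * (a + b) * t.
    by apply: ler_wpM2r; [exact: ltW | exact: h1].
  set k := (alpha * a + beta * b) * t in h2 *.
  have k0 : 0 <= k by rewrite /k; apply: mulr_ge0; last exact: ltW; apply: addr_ge0; apply: mulr_ge0 => //; exact: ltW.
  rewrite -/t; set K := Num.max alpha beta * (a + b) * t in h2.
  have -> : 2 * Num.max alpha beta * ((a + b) * t) = 2 * K by rewrite /K !mulrA.
  rewrite [2 * K]mulrC; apply: (le_trans (ler_wpM2l k0 u2)); apply: ler_wpM2r => //.
Qed.
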